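(* Let $G$ be a finite group and $H$ a proper subgroup with $[G:H]\geq 3$. Let $M$ be a simple rank $3$ $G$-invariant matroid whose ground $G$-set is $G/H$. Define a relation on $G/H - \{\bar{1}\}$ by $\bar{a} \sim \bar{b}$ if $\bar{a} = \bar{b}$ or $\{\bar{1},\bar{a},\bar{b}\}$ is dependent. Then: (1) $\sim$ is a nontrivial equivalence relation; (2) if $\bar{a} \sim \bar{b}$ and $\bar{a} \neq \bar{b}$, then $\overline{a^{-1}} \sim \overline{a^{-1}b}$; (3) for any $h \in H$ and $a,b \in G - H$, if $\bar{a} \sim \bar{b}$ then $\overline{ha} \sim \overline{hb}$; (4) the bases of $M$ are precisely the sets $\{\bar{a},\bar{b},\bar{c}\} \subseteq G/H$ with the three elements distinct and $\overline{a^{-1}b} \not\sim \overline{a^{-1}c}$.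
   Context: $G/H$ is the set of left cosets with $G$ acting by left multiplication; $\bar{a} = aH$. A matroid on a $G$-set is $G$-invariant if $gB$ is a basis for every basis $B$ and $g\in G$. A matroid is simple if every circuit has at least three elements. An equivalence relation is nontrivial if it has at least two classes. *)

(* Defs.v *)
From mathcomp Require Import all_boot all_fingroup.
Set Implicit Arguments. Unset Strict Implicit. Unset Printing Implicit Defensive.

Local Open Scope group_scope.

Section Matroids.
Variable T : finType.

Definition matroid_bases (E : {set T}) (B : {set {set T}}) : Prop :=
  [/\ B != set0,
      (forall X, X \in B -> X \subset E) &
      (forall X Y, X \in B -> Y \in B -> forall x, x \in X :\: Y ->
         exists2 y, y \in Y :\: X & (y |: (X :\ x)) \in B)].

Definition m_indep (B : {set {set T}}) (X : {set T}) : bool :=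
  [exists Y in B, X \subset Y].

Definition m_dep (E : {set T}) (B : {set {set T}}) (X : {set T}) : bool :=
  (X \subset E) && ~~ m_indep B X.

Definition m_circuit (E : {set T}) (B : {set {set T}}) (C : {set T}) : bool :=
  m_dep E B C && [forall D : {set T}, (D \proper C) ==> m_indep B D].

Definition m_simple (E : {set T}) (B : {set {set T}}) : Prop :=
  forall C, m_circuit E B C -> 3 <= #|C|.

Definition m_rank_is (B : {set {set T}}) (r : nat) : Prop :=
  forall X, X \in B -> #|X| = r.
End Matroids.

Section CosetMatroid.
Variable gT : finGroupType.

Definition cbar (H : {set gT}) (a : gT) : {set gT} := a *: H.

Definition cact (g : gT) (X : {set {set gT}}) : {set {set gT}} :=
  [set g *: C | C in X].

Definition G_invariant (G : {set gT}) (B : {set {set {set gT}}}) : Prop :=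
  forall g X, g \in G -> X \in B -> cact g X \in B.

Definition simrel (G H : {set gT}) (B : {set {set {set gT}}}) (C D : {set gT}) : Prop :=
  C = D \/ m_dep (lcosets H G) B [set cbar H 1; C; D].
End CosetMatroid.

(* Main.v *)
Require Import Defs.
From mathcomp Require Import all_boot all_fingroup.
Local Open Scope group_scope.
Set Implicit Arguments. Unset Strict Implicit. Unset Printing Implicit Defensive.

Lemma card3_ex (T : finType) (X : {set T}) : #|X| = 3%N ->
  exists a b c, [/\ X = [set a; b; c], a != b, a != c & b != c].
Proof.
move=> cX.
have /set0Pn[a aX] : X != set0 by rewrite -card_gt0 cX.
have c1 : #|X :\ a| = 2%N by move: cX; rewrite (cardsD1 a X) aX => -[].
have /set0Pn[b bX] : X :\ a != set0 by rewrite -card_gt0 c1.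
have c2 : #|X :\ a :\ b| = 1%N by move: c1; rewrite (cardsD1 b) bX => -[].
have [c Ec] := cards1P (introT eqP c2).
have cX' : c \in X :\ a :\ b by rewrite Ec set11.
move: bX cX'; rewrite !inE => /andP[ba bX] /and3P[cb ca cX0].
exists a, b, c; split; rewrite 1?eq_sym //.
apply/setP => z; rewrite !inE.
case: (boolP (z == a)) => [/eqP->|za]; first by rewrite aX.
case: (boolP (z == b)) => [/eqP->|zb]; first by rewrite bX.
have := f_equal (fun S : {set T} => z \in S) Ec; rewrite /= !inE za zb /=.
by move=> ->.
Qed.

Lemma card3_set (T : finType) (a b c : T) : a != b -> a != c -> b != c ->
  #|[set a; b; c]| = 3%N.
Proof.
move=> ab ac bc.
have -> : [set a; b; c] = a |: [set b; c].
  by apply/setP => z; rewrite !inE orbA.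
by rewrite cardsU1 cards2 !inE negb_or ab ac bc.
Qed.

Lemma set3C12 (T : finType) (a b c : T) : [set a; b; c] = [set b; a; c].
Proof. by apply/setP => z; rewrite !inE; case: (z == a); case: (z == b). Qed.

Lemma set3C23 (T : finType) (a b c : T) : [set a; b; c] = [set a; c; b].
Proof. by apply/setP => z; rewrite !inE; case: (z == a); case: (z == b); case: (z == c). Qed.

Lemma cbarM (gT : finGroupType) (H : {set gT}) g a : g *: cbar H a = cbar H (g * a).
Proof. by rewrite /cbar lcosetM. Qed.

Lemma cact3 (gT : finGroupType) g (A B C : {set gT}) :
  cact g [set A; B; C] = [set g *: A; g *: B; g *: C].
Proof. by rewrite /cact !imsetU !imset_set1. Qed.

Lemma cactK (gT : finGroupType) g (X : {set {set gT}}) : cact g^-1 (cact g X) = X.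
Proof.
rewrite /cact -imset_comp.
rewrite (eq_imset _ (fun C => lcosetK g C)).
by rewrite imset_id.
Qed.

Lemma indep_act (gT : finGroupType) (G : {set gT}) B g (X : {set {set gT}}) :
  G_invariant G B -> g \in G -> m_indep B X -> m_indep B (cact g X).
Proof.
move=> GI gG /existsP[Y /andP[YB XY]]; apply/existsP; exists (cact g Y).
by rewrite GI // imsetS.
Qed.

Lemma indep_actE (gT : finGroupType) (G : {group gT}) B g (X : {set {set gT}}) :
  G_invariant G B -> g \in G -> m_indep B (cact g X) = m_indep B X.
Proof.
move=> GI gG; apply/idP/idP; last exact: (indep_act GI gG).
by move/(indep_act GI (groupVr gG)); rewrite cactK.
Qed.

Lemma E_act (gT : finGroupType) (G H : {group gT}) g (X : {set {set gT}}) :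
  X \subset lcosets H G -> g \in G -> cact g X \subset lcosets H G.
Proof.
move=> XE gG; apply/subsetP => _ /imsetP[C CX ->].
have /lcosetsP[x xG ->] := subsetP XE C CX.
by apply/lcosetsP; exists (g * x); rewrite ?groupM // lcosetM.
Qed.

Lemma dep_act (gT : finGroupType) (G H : {group gT}) B g (X : {set {set gT}}) :
  G_invariant G B -> g \in G -> m_dep (lcosets H G) B X -> m_dep (lcosets H G) B (cact g X).
Proof.
move=> GI gG /andP[XE NI]; apply/andP; split; first exact: E_act.
by rewrite (indep_actE _ GI gG).
Qed.

Lemma circuit_ex (T : finType) (E : {set T}) B n : forall X : {set T},
  #|X| <= n -> m_dep E B X -> exists2 C : {set T}, C \subset X & m_circuit E B C.
Proof.
elim: n => [|n IH] X cX dX.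
  case: (boolP [forall D : {set T}, (D \proper X) ==> m_indep B D]) => Hf.
    by exists X => //; rewrite /m_circuit dX.
  move/forallPn: Hf => [D]; rewrite negb_imply => /andP[DX _].
  by move: (proper_card DX); rewrite ltnNge (leq_trans cX (leq0n _)).
case: (boolP [forall D : {set T}, (D \proper X) ==> m_indep B D]) => Hf.
  by exists X => //; rewrite /m_circuit dX.
move/forallPn: Hf => [D]; rewrite negb_imply => /andP[DX ND].
have dD : m_dep E B D.
  move: dX => /andP[XE _]; rewrite /m_dep ND andbT.
  exact: subset_trans (proper_sub DX) XE.
have cD : #|D| <= n by rewrite -ltnS (leq_trans (proper_card DX)).
have [C CD cC] := IH D cD dD.
by exists C => //; exact: subset_trans CD (proper_sub DX).
Qed.

Lemma simple_pair (T : finType) (E : {set T}) B a b :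
  m_simple E B -> a \in E -> b \in E -> m_indep B [set a; b].
Proof.
move=> Hs aE bE; case: (boolP (m_indep B [set a; b])) => // NI; exfalso.
have dX : m_dep E B [set a; b].
  rewrite /m_dep NI andbT; apply/subsetP => z /set2P[]->//.
have [C CX cC] := circuit_ex (leqnn _) dX.
have := Hs C cC; have := subset_leq_card CX; rewrite cards2.
case: (a != b) => /= h1 h2; by have := leq_trans h2 h1.
Qed.

Lemma indep3_basis (T : finType) B (X : {set T}) :
  m_rank_is B 3 -> #|X| = 3%N -> m_indep B X -> X \in B.
Proof.
move=> Hr cX /existsP[Y /andP[YB XY]].
have -> : X = Y by apply/eqP; rewrite eqEcard XY cX Hr.
done.
Qed.

Lemma indep_sub3 (T : finType) (B : {set {set T}}) (W : {set T}) a b c :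
  W \in B -> a \in W -> b \in W -> c \in W -> m_indep B [set a; b; c].
Proof.
move=> WB aW bW cW; apply/existsP; exists W; rewrite WB /=.
by apply/subsetP => z; rewrite !inE => /orP[/orP[]|]/eqP->.
Qed.

Lemma basis_form (gT : finGroupType) (G H : {group gT}) B (X : {set {set gT}}) :
  matroid_bases (lcosets H G) B -> m_rank_is B 3 -> G_invariant G B -> X \in B ->
  exists a b c, [/\ [/\ a \in G, b \in G & c \in G],
        X = [set cbar H a; cbar H b; cbar H c],
        [/\ cbar H a <> cbar H b, cbar H a <> cbar H c & cbar H b <> cbar H c]
      & [set cbar H 1; cbar H (a^-1 * b); cbar H (a^-1 * c)] \in B].
Proof.
move=> [_ BE _] Hr GI XB.
have [A [B1 [C1 [EX AB AC BC]]]] := card3_ex (Hr X XB).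
have XE := BE X XB.
have /lcosetsP[a aG Ea] : A \in lcosets H G by apply: (subsetP XE); rewrite EX !inE eqxx.
have /lcosetsP[b bG Eb] : B1 \in lcosets H G by apply: (subsetP XE); rewrite EX !inE eqxx ?orbT.
have /lcosetsP[c cG Ec] : C1 \in lcosets H G by apply: (subsetP XE); rewrite EX !inE eqxx ?orbT.
subst A B1 C1.
exists a, b, c; split => //.
  by split; apply/eqP.
have := GI _ _ (groupVr aG) XB; rewrite EX cact3 !cbarM mulVg.
done.
Qed.

Theorem lemma3p6 (gT : finGroupType) (G H : {group gT}) (B : {set {set {set gT}}}) :
  H \proper G -> 3 <= #|G : H| ->
  matroid_bases (lcosets H G) B -> m_simple (lcosets H G) B -> m_rank_is B 3 ->
  G_invariant G B ->
  let D := lcosets H G :\ cbar H 1 in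
  let sim := simrel G H B in
  (* (1) nontrivial equivalence relation on D *)
  ((forall C, C \in D -> sim C C) /\
   (forall C1 C2, C1 \in D -> C2 \in D -> sim C1 C2 -> sim C2 C1) /\
   (forall C1 C2 C3, C1 \in D -> C2 \in D -> C3 \in D ->
      sim C1 C2 -> sim C2 C3 -> sim C1 C3) /\
   (exists C1 C2, [/\ C1 \in D, C2 \in D & ~ sim C1 C2])) /\
  (* (2) *)
  (forall a b, a \in G :\: H -> b \in G :\: H ->
     sim (cbar H a) (cbar H b) -> cbar H a <> cbar H b ->
     sim (cbar H a^-1) (cbar H (a^-1 * b))) /\
  (* (3) *)
  (forall h a b, h \in H -> a \in G :\: H -> b \in G :\: H ->
     sim (cbar H a) (cbar H b) -> sim (cbar H (h * a)) (cbar H (h * b))) /\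
  (* (4) *)
  (forall X : {set {set gT}},
     X \in B <->
     exists a b c, [/\ [/\ a \in G, b \in G & c \in G],
        X = [set cbar H a; cbar H b; cbar H c],
        [/\ cbar H a <> cbar H b, cbar H a <> cbar H c & cbar H b <> cbar H c]
      & ~ sim (cbar H (a^-1 * b)) (cbar H (a^-1 * c))]).
Proof.
move=> pHG _ MB Hs Hr GI D sim.
rewrite {}/D {}/sim.
have MB' := MB; case: MB' => [BN BE Hex].
set E := lcosets H G.
set O := cbar H 1.
have OE : O \in E by apply/lcosetsP; exists 1; rewrite ?group1.
have cbE x : x \in G -> cbar H x \in E by move=> xG; apply/lcosetsP; exists x.
have indep_notdep : forall S : {set {set gT}}, S \subset E -> ~ m_dep E B S -> m_indep B S.
  by move=> S SE ND; case: (boolP (m_indep B S)) => // NI; exfalso; apply: ND; rewrite /m_dep SE NI.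
have P4 : forall X : {set {set gT}},
     X \in B <->
     exists a b c, [/\ [/\ a \in G, b \in G & c \in G],
        X = [set cbar H a; cbar H b; cbar H c],
        [/\ cbar H a <> cbar H b, cbar H a <> cbar H c & cbar H b <> cbar H c]
      & ~ simrel G H B (cbar H (a^-1 * b)) (cbar H (a^-1 * c))].
  move=> X; split.
    move=> XB; have [a [b [c [[aG bG cG] EX [ab ac bc] YB]]]] := basis_form MB Hr GI XB.
    exists a, b, c; split => //.
    case=> [Ebc|dp].
      by apply: bc; rewrite -[b](mulKVg a) -[c](mulKVg a) -!(cbarM _ a) Ebc.
    move: dp => /andP[_ /negP]; apply.
    by apply: (indep_sub3 YB); rewrite !inE eqxx ?orbT.
  move=> [a [b [c [[aG bG cG] EX [ab ac bc] NS]]]].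
  have SE : [set O; cbar H (a^-1 * b); cbar H (a^-1 * c)] \subset E.
    by apply/subsetP => z; rewrite !inE => /orP[/orP[]|]/eqP->//; apply: cbE; rewrite groupM ?groupV.
  have IS := indep_notdep _ SE (fun d => NS (or_intror d)).
  have := indep_act GI aG IS; rewrite cact3 !cbarM mulg1 !mulKVg -EX => IX.
  apply: indep3_basis Hr _ IX.
  by rewrite EX card3_set //; apply/eqP.
rewrite /simrel; split; last split; last split; last exact: P4.
-
  split; first by move=> C _; left.
  split.
    move=> C1 C2 _ _ [->|d]; first by left.
    by right; rewrite set3C23.
  split; last first.
    have /set0Pn[X XB] := BN.
    have [a [b [c [[aG bG cG] EX [ab ac bc] NS]]]] := (P4 X).1 XB.
    exists (cbar H (a^-1 * b)), (cbar H (a^-1 * c)); split => //.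
      rewrite !inE cbE ?groupM ?groupV // andbT; apply/eqP => e.
      by apply: ab; rewrite -[b](mulKVg a) -cbarM e cbarM mulg1.
    rewrite !inE cbE ?groupM ?groupV // andbT; apply/eqP => e.
    by apply: ac; rewrite -[c](mulKVg a) -cbarM e cbarM mulg1.
  move=> C1 C2 C3 D1 D2 D3 [e12|d12] [e23|d23].
  + by left; rewrite e12.
  + by rewrite e12; right.
  + by rewrite -e23; right.
  move: D1 D2 D3; rewrite !inE => /andP[n1 E1] /andP[n2 E2] /andP[n3 E3].
  case: (eqVneq C1 C3) => [->|n13]; first by left.
  case: (eqVneq C1 C2) => [e12|n12]; first by rewrite e12; right.
  case: (eqVneq C2 C3) => [e23|n23]; first by rewrite -e23; right.
  right; rewrite /m_dep.
  have SE : [set O; C1; C3] \subset E.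
    by apply/subsetP => z; rewrite !inE => /orP[/orP[]|]/eqP->.
  rewrite SE /=; apply/negP => I13.
  have X13 : [set O; C1; C3] \in B.
    by apply: indep3_basis Hr _ I13; rewrite card3_set // eq_sym.
  have /existsP[Y /andP[YB sY]] := simple_pair Hs OE E2.
  have OY : O \in Y by apply: (subsetP sY); rewrite !inE eqxx.
  have C2Y : C2 \in Y by apply: (subsetP sY); rewrite !inE eqxx orbT.
  move: d12 d23 => /andP[_ /negP N12] /andP[_ /negP N23].
  case: (boolP (Y \subset [set O; C2])) => [/subset_leq_card|/subsetPn[y yY ynS]].
    by rewrite cards2 (Hr Y YB); case: (O != C2).
  move: ynS; rewrite !inE negb_or => /andP[yO yC2].
  case: (boolP (y \in [set O; C1; C3])) => [|ynX].
    rewrite !inE (negbTE yO) /= => /orP[]/eqP ey; subst y.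
      by apply: N12; apply: (indep_sub3 YB).
    by apply: N23; apply: (indep_sub3 YB).
  have yYX : y \in Y :\: [set O; C1; C3] by rewrite inE ynX yY.
  have [z] := Hex Y _ YB X13 y yYX.
  rewrite !inE => /andP[zY zX] ZB.
  have OZ : O \in z |: (Y :\ y) by rewrite !inE OY (eq_sym O y) yO orbT.
  have C2Z : C2 \in z |: (Y :\ y) by rewrite !inE C2Y (eq_sym C2 y) yC2 orbT.
  have zZ : z \in z |: (Y :\ y) by rewrite !inE eqxx.
  move: zX => /orP[/orP[]|]/eqP ez; subst z.
  + by rewrite OY in zY.
  + by apply: N12; apply: (indep_sub3 ZB).
  + by apply: N23; apply: (indep_sub3 ZB).
-
  move=> a b /setDP[aG _] _ [e|d] nab; first by case: nab.
  right; have := dep_act GI (groupVr aG) d.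
  by rewrite cact3 !cbarM mulg1 mulVg set3C12.
- move=> h a b hH _ _ [e|d]; first by left; rewrite -!cbarM e.
  right; have hG := subsetP (proper_sub pHG) h hH.
  have Eh : h *: O = O by rewrite /O /cbar lcoset1 lcoset_id.
  have := dep_act GI hG d.
  by rewrite cact3 Eh !cbarM.
Qed.
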